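(* Let $n$ and $0<n_1<\cdots<n_d<n$ be integers with $m_1=n_1$, $m_k=n_k-n_{k-1}$ ($2\le k\le d$), $m_{d+1}=n-n_d$, and regard $\mathrm{Flag}(n_1,\dots,n_d;n)=\{(VJ_1V^{\mathsf T},\dots,VJ_dV^{\mathsf T}):V\in\mathrm{O}(n)\}\subseteq(\mathbb{R}^{n\times n})^d$. Let $\mathfrak f=V(J_1,\dots,J_d)V^{\mathsf T}$. Then \[ \mathbb{T}_{\mathfrak f}\mathrm{Flag}(n_1,\dots,n_d;n)=\{V(AJ_1-J_1A,\dots,AJ_d-J_dA)V^{\mathsf T}: A\in\mathfrak{so}(n),\ A(p,p)=0 \text{ for } p=1,\dots,d+1\}. \] Equivalently, $\mathbb{T}_{\mathfrak f}\mathrm{Flag}(n_1,\dots,n_d;n)$ consists of the tuples $V(X_1,\dots,X_d)V^{\mathsf T}$ with $X_1,\dots,X_d$ symmetric $n\times n$ matrices satisfying \[ X_k(k,l)=-X_l(k,l),\quad X_k(p,q)=0,\quad X_k(k,k)=0 \] for all $1\le k,l\le d$ and $1\le p,q\le d+1$ with $p,q,l\neq k$.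
   Context: $J_k=\operatorname{diag}(-I_{m_1},\dots,-I_{m_{k-1}},I_{m_k},-I_{m_{k+1}},\dots,-I_{m_{d+1}})$. $V(X_1,\dots,X_d)V^{\mathsf T}$ denotes $(VX_1V^{\mathsf T},\dots,VX_dV^{\mathsf T})$. For an $n\times n$ matrix $M$, $M(p,q)\in\mathbb{R}^{m_p\times m_q}$ denotes its $(p,q)$ block in the partition $n=m_1+\cdots+m_{d+1}$. $\mathfrak{so}(n)$ is the space of real skew-symmetric $n\times n$ matrices. *)

(* Defs.v *)
From HB Require Import structures.
From mathcomp Require Import all_boot all_order all_algebra.
From mathcomp Require Import all_classical all_reals all_analysis.
Set Implicit Arguments. Unset Strict Implicit. Unset Printing Implicit Defensive.
Import Order.TTheory GRing.Theory Num.Theory.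
Local Open Scope classical_set_scope.
Local Open Scope ring_scope.

(* The flag is given by s = [:: n_1; ...; n_d] (so d = size s).
   Row/column indices are 0-based: i : 'I_n.  Blocks are 0-based too:
   block p (0 <= p <= d) is { i | n_p <= i < n_{p+1} } with n_0 = 0,
   n_{d+1} = n; i.e. paper block p+1. *)
Definition blk (s : seq nat) (i : nat) : nat := count (fun c => c <= i)%N s.

(* J_k (paper J_{k+1}) for 0-based k : +1 on block k, -1 elsewhere. *)
Definition Jmx (R : realType) (n : nat) (s : seq nat) (k : nat) : 'M[R]_n :=
  \matrix_(i, j) (if i == j then (if blk s i == k then 1 else -1) else 0).

Definition flag (R : realType) (n : nat) (s : seq nat)
  : set ('I_(size s) -> 'M[R]_n) :=
  [set F | exists V : 'M[R]_n, V *m V^T = 1%:M /\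
                              F = (fun k : 'I_(size s) => V *m Jmx R n s k *m V^T)].

Definition tangent_space (R : realType) (n d : nat)
  (M : set ('I_d -> 'M[R]_n)) (f : 'I_d -> 'M[R]_n) : set ('I_d -> 'M[R]_n) :=
  [set X | exists g : R -> 'I_d -> 'M[R]_n,
     (forall t, M (g t)) /\ g 0 = f /\
     (forall k i j, derivable (fun t => g t k i j) 0 1) /\
     X = (fun k => \matrix_(i, j) derive1 (fun t : R => g t k i j) 0)].

Arguments tangent_space {R n d} M f.
Arguments flag R n s : clear implicits.
Arguments Jmx R n s k : clear implicits.

(* Main.v *)
Require Import Defs.
From HB Require Import structures.
From mathcomp Require Import all_boot all_order all_algebra.
From mathcomp Require Import all_classical all_reals all_analysis.
From mathcomp Require Import ring lra.
Import Order.TTheory GRing.Theory Num.Theory.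
Local Open Scope classical_set_scope.
Local Open Scope ring_scope.

Set Implicit Arguments.
Section MD.
Variables (R : realType).

Definition MD (m n : nat) (F : R -> 'M[R]_(m, n)) (D : 'M[R]_(m, n)) :=
  forall i j, is_derive (0:R) (1:R) (fun t => F t i j) (D i j).

Lemma MD_cst m n (C : 'M[R]_(m,n)) : MD (fun _ => C) 0.
Proof. move=> i j; rewrite mxE; exact: is_derive_cst. Qed.

Lemma MD_add m n F G (D1 D2 : 'M[R]_(m,n)) : MD F D1 -> MD G D2 ->
  MD (fun t => F t + G t) (D1 + D2).
Proof.
move=> h1 h2 i j; rewrite mxE.
have -> : (fun t => (F t + G t) i j) = (fun t => F t i j) + (fun t => G t i j).
  by apply/funext => t; rewrite !mxE.
exact: is_deriveD.
Qed.


Lemma MD_tr m n F (D : 'M[R]_(m,n)) : MD F D -> MD (fun t => (F t)^T) D^T.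
Proof.
move=> h i j; rewrite mxE.
have -> : (fun t => (F t)^T i j) = (fun t => F t j i).
  by apply/funext => t; rewrite !mxE.
exact: h.
Qed.

Lemma MD_mul m n p F G (D1 : 'M[R]_(m,n)) (D2 : 'M[R]_(n,p)) : MD F D1 -> MD G D2 ->
  MD (fun t => F t *m G t) (D1 *m G 0 + F 0 *m D2).
Proof.
move=> h1 h2 i j; rewrite !mxE.
have -> : (fun t => (F t *m G t) i j) =
   \sum_(l < n) ((fun t => F t i l) * (fun t => G t l j)).
  rewrite fct_sumE; apply/funext => t /=; rewrite !mxE; exact: eq_bigr.
have -> : \sum_(l < n) D1 i l * G 0 l j + \sum_(l < n) F 0 i l * D2 l j =
   \sum_(l < n) (F 0 i l *: D2 l j + G 0 l j *: D1 i l).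
  by rewrite -big_split /=; apply: eq_bigr => l _; rewrite addrC [D1 i l * _]mulrC.
apply: is_derive_sum => l.
exact: is_deriveM.
Qed.
End MD.
Arguments MD {R m n}. Arguments MD_cst {R m n}. Arguments MD_add {R m n F G D1 D2}. Arguments MD_tr {R m n F D}. Arguments MD_mul {R m n p F G D1 D2}.
Section Rot.
Variables (R : realType).

Lemma isd_lin (c : R) : is_derive (0:R) 1 (fun t => c * t) c.
Proof.
have h := is_deriveZ c (is_derive_id (0:R) (1:R)).
exact: (is_derive_eq h (mulr1 c)).
Qed.

Lemma isd_cos (c : R) : is_derive (0:R) 1 (fun t => cos (c * t)) 0.
Proof.
have h := is_derive1_comp (is_derive_cos (c * 0)) (isd_lin c).
by rewrite mulr0 sin0 oppr0 mul0r in h.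
Qed.

Lemma isd_sin (c : R) : is_derive (0:R) 1 (fun t => sin (c * t)) c.
Proof.
have h := is_derive1_comp (is_derive_sin (c * 0)) (isd_lin c).
by rewrite mulr0 cos0 mul1r in h.
Qed.

Lemma MD_scale m n (h : R -> R) dh (C : 'M[R]_(m,n)) :
  is_derive (0:R) (1:R) h dh -> MD (fun t => h t *: C) (dh *: C).
Proof.
move=> hd i j; rewrite mxE.
have -> : (fun t => (h t *: C) i j) = (C i j \*: h).
  by apply/funext => t; rewrite !mxE /= mulrC.
rewrite mulrC; exact: is_deriveZ.
Qed.

Variable n : nat.
Definition Km (i j : 'I_n) : 'M[R]_n := delta_mx i j - delta_mx j i.
Definition Pm (i j : 'I_n) : 'M[R]_n := delta_mx i i + delta_mx j j.
Definition Gm (i j : 'I_n) (th : R) : 'M[R]_n :=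
  if i == j then 1%:M else 1%:M + (cos th - 1) *: Pm i j + sin th *: Km i j.

Lemma Gm0 i j : Gm i j 0 = 1%:M.
Proof. by rewrite /Gm cos0 sin0 subrr !scale0r !addr0 if_same. Qed.

Lemma Km_ii i : Km i i = 0.
Proof. by rewrite /Km subrr. Qed.

Lemma MD_Gm i j (c : R) : MD (fun t => Gm i j (c * t)) (c *: Km i j).
Proof.
rewrite /Gm; case: eqP => [<-|_]; first by rewrite Km_ii scaler0; exact: MD_cst.
rewrite -[c *: _]add0r -[0]addr0.
apply: MD_add; last exact/MD_scale/isd_sin.
apply: MD_add; first exact: MD_cst.
rewrite -(scale0r (Pm i j)); apply: MD_scale.
have := is_deriveB (isd_cos c) (is_derive_cst (1:R) (0:R) 1).
by rewrite subr0.
Qed.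


Lemma Gm_orth i j th : Gm i j th *m (Gm i j th)^T = 1%:M.
Proof.
rewrite /Gm; case: eqP => [_|/eqP ij]; first by rewrite trmx1 mulmx1.
have ji : j != i by rewrite eq_sym.
have PT : (Pm i j)^T = Pm i j by rewrite /Pm linearD /= !trmx_delta.
have KT : (Km i j)^T = - Km i j by rewrite /Km linearB /= !trmx_delta opprB.
have PP : Pm i j *m Pm i j = Pm i j.
  rewrite /Pm !mulmxDl !mulmxDr !mul_delta_mx_cond !eqxx (negPf ij) (negPf ji) !mulr0n !mulr1n.
  by apply/matrixP => x y; rewrite !mxE; ring.
have PK : Pm i j *m Km i j = Km i j.
  rewrite /Pm /Km !mulmxDl !mulmxBr !mul_delta_mx_cond !eqxx (negPf ij) (negPf ji) !mulr0n !mulr1n.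
  by apply/matrixP => x y; rewrite !mxE; ring.
have KP : Km i j *m Pm i j = Km i j.
  rewrite /Pm /Km !mulmxBl !mulmxDr !mul_delta_mx_cond !eqxx (negPf ij) (negPf ji) !mulr0n !mulr1n.
  by apply/matrixP => x y; rewrite !mxE; ring.
have KK : Km i j *m Km i j = - Pm i j.
  rewrite /Pm /Km !mulmxBl !mulmxBr !mul_delta_mx_cond !eqxx (negPf ij) (negPf ji) !mulr0n !mulr1n.
  by apply/matrixP => x y; rewrite !mxE; ring.
move: PT KT PP PK KP KK; generalize (Pm i j) (Km i j) => P K PT KT PP PK KP KK.
set a := cos th - 1; set s := sin th.
have -> : (1%:M + a*:P + s*:K)^T = 1%:M + a*:P + s*:(-K).
  by rewrite [LHS]linearD [X in X + _]linearD /= !linearZ /= trmx1 PT KT.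
have -> : (1%:M + a *: P + s *: K) *m (1%:M + a *: P + s *: - K)
   = 1%:M + (a * 2 + a ^+ 2 + s ^+ 2) *: P.
  rewrite !mulmxDl !mulmxDr !mul1mx !mulmx1 -!scalemxAl -!scalemxAr.
  rewrite !mulmxN PP PK KP KK.
  apply/matrixP => x y; rewrite !mxE; ring.
have -> : a * 2 + a ^+ 2 + s ^+ 2 = 0.
  have h := cos2Dsin2 th.
  transitivity (cos th ^+ 2 + sin th ^+ 2 - 1); first by rewrite /a /s; ring.
  by rewrite h subrr.
by rewrite scale0r addr0.
Qed.

Definition Qc (A : 'M[R]_n) (l : seq ('I_n * 'I_n)) (t : R) : 'M[R]_n :=
  foldr (fun p M => Gm p.1 p.2 ((2^-1 * A p.1 p.2) * t) *m M) 1%:M l.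

Lemma Qc_orth A l t : Qc A l t *m (Qc A l t)^T = 1%:M.
Proof.
elim: l => [|p l IH] /=; first by rewrite trmx1 mulmx1.
by rewrite trmx_mul mulmxA -(mulmxA (Gm _ _ _)) IH mulmx1 Gm_orth.
Qed.

Lemma Qc0 A l : Qc A l 0 = 1%:M.
Proof. by elim: l => [|p l IH] //=; rewrite IH mulr0 Gm0 mulmx1. Qed.

Lemma MD_Qc A l : MD (Qc A l) (\sum_(p <- l) (2^-1 * A p.1 p.2) *: Km p.1 p.2).
Proof.
elim: l => [|p l IH] /=; first by rewrite big_nil; exact: MD_cst.
rewrite big_cons.
have := MD_mul (MD_Gm p.1 p.2 (2^-1 * A p.1 p.2)) IH.
by rewrite Qc0 mulr0 Gm0 mulmx1 mul1mx.
Qed.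

Lemma sumK A : A^T = - A ->
  \sum_(p <- index_enum ('I_n * 'I_n)%type) (2^-1 * A p.1 p.2) *: Km p.1 p.2 = A.
Proof.
move=> skA.
rewrite -(pair_bigA _ (fun i j => (2^-1 * A i j) *: Km i j)) /=.
set C : 'M[R]_n := \matrix_(i, j) (2^-1 * A i j).
have e1 : \sum_i \sum_j (2^-1 * A i j) *: delta_mx i j = C.
  by rewrite [RHS]matrix_sum_delta; apply: eq_bigr => i _; apply: eq_bigr => j _; rewrite mxE.
have e2 : \sum_i \sum_j (2^-1 * A i j) *: delta_mx j i = C^T.
  rewrite [RHS]matrix_sum_delta exchange_big /=.
  by apply: eq_bigr => i _; apply: eq_bigr => j _; rewrite !mxE.
rewrite /Km.
under eq_bigr do under eq_bigr do rewrite scalerBr.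
under eq_bigr do rewrite sumrB.
rewrite sumrB e1 e2.
apply/matrixP => i j; rewrite !mxE.
have : A^T i j = (- A) i j by rewrite skA.
by rewrite !mxE => ->; field.
Qed.
End Rot.
Arguments Qc {R n}. Arguments sumK {R n}. Arguments MD_Qc {R n}. Arguments Qc0 {R n}. Arguments Qc_orth {R n}.


Section Main.
Variables (R : realType) (n : nat) (s : seq nat).
Definition jv (k i : nat) : R := if blk s i == k then 1 else -1.

Lemma JmxD k : Jmx R n s k = diag_mx (\row_i jv k i).
Proof. by apply/matrixP => i j; rewrite !mxE /jv; case: (eqVneq i j) => [->|ne]; rewrite ?eqxx ?(negPf ne) ?mulr1n ?mulr0n. Qed.

Lemma mulJr k (Y : 'M[R]_n) i j : (Y *m Jmx R n s k) i j = Y i j * jv k j.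
Proof. by rewrite JmxD mul_mx_diag !mxE. Qed.

Lemma mulJl k (Y : 'M[R]_n) i j : (Jmx R n s k *m Y) i j = jv k i * Y i j.
Proof. by rewrite JmxD mul_diag_mx !mxE. Qed.

Lemma jv2 k i : jv k i * jv k i = 1.
Proof. by rewrite /jv; case: ifP => _; rewrite ?mulr1 ?mulN1r ?opprK. Qed.

Lemma JJ k : Jmx R n s k *m Jmx R n s k = 1%:M.
Proof.
apply/matrixP => i j; rewrite mulJl !mxE; case: (eqVneq i j) => [->|ne]; rewrite ?eqxx ?(negPf ne) ?mulr0 //.
by rewrite jv2.
Qed.

Lemma Jcomm k l : Jmx R n s k *m Jmx R n s l = Jmx R n s l *m Jmx R n s k.
Proof. by apply/matrixP => i j; rewrite !JmxD !mul_diag_mx !mxE; case: (eqVneq i j) => [->|ne]; rewrite ?eqxx ?(negPf ne) ?mulr0n ?mulr1n ?mulr0 // mulrC. Qed.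

Lemma JT k : (Jmx R n s k)^T = Jmx R n s k.
Proof. by apply/matrixP => i j; rewrite !mxE; case: (eqVneq i j) => [->|ne]; rewrite ?eqxx // eq_sym (negPf ne). Qed.

Lemma S2_S1 (V : 'M[R]_n) (Y : 'I_(size s) -> 'M[R]_n) :
  (forall k, (Y k)^T = Y k) ->
  (forall (k l : 'I_(size s)) (i j : 'I_n), l != k ->
          blk s i = k -> blk s j = l -> Y k i j = - Y l i j) ->
  (forall (k : 'I_(size s)) (i j : 'I_n),
          blk s i <> k -> blk s j <> k -> Y k i j = 0) ->
  (forall (k : 'I_(size s)) (i j : 'I_n),
          blk s i = k -> blk s j = k -> Y k i j = 0) ->
  exists A : 'M[R]_n, A^T = - A /\
       (forall i j : 'I_n, blk s i = blk s j -> A i j = 0) /\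
       (fun k => V *m Y k *m V^T) = (fun k : 'I_(size s) =>
              V *m (A *m Jmx R n s k - Jmx R n s k *m A) *m V^T).
Proof.
move=> Ysym Yanti Y0 Ykk.
have bd : forall i : 'I_n, (blk s i <= size s)%N by move=> i; exact: count_size.
pose Yn (p : nat) (i j : 'I_n) := oapp (fun k : 'I_(size s) => Y k i j) 0 (insub p).
have YnE : forall (k : 'I_(size s)) i j, Yn k i j = Y k i j.
  by move=> k i j; rewrite /Yn valK.
pose A : 'M[R]_n := \matrix_(i, j)
  (if blk s i == blk s j then 0 else
   if (blk s j < size s)%N then Yn (blk s j) i j / 2
   else - Yn (blk s i) i j / 2).
have Ye : forall (k : 'I_(size s)) i j, Y k j i = Y k i j.
  by move=> k i j; rewrite -[in LHS]Ysym mxE.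
exists A; split; [|split].
- apply/matrixP => i j; rewrite !mxE.
  rewrite eq_sym; case: eqP => [_|/eqP ne]; first by rewrite oppr0.
  have bi := bd i; have bj := bd j.
  case: ltnP => hi; case: ltnP => hj.
  + have -> : blk s i = Ordinal hi by [].
    have -> : blk s j = Ordinal hj by [].
    rewrite !YnE Ye (Yanti (Ordinal hi) (Ordinal hj)) //= ?mulNr //.
    by apply: contra ne => /eqP [->].
  + have -> : blk s i = Ordinal hi by [].
    by rewrite !YnE mulNr opprK Ye.
  + have -> : blk s j = Ordinal hj by [].
    by rewrite !YnE mulNr Ye.
  + have ei : blk s i = size s by apply/eqP; rewrite eqn_leq bd hi.
    have ej : blk s j = size s by apply/eqP; rewrite eqn_leq bd hj.
    by move: ne; rewrite ei ej eqxx.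
- by move=> i j e; rewrite mxE e eqxx.
apply/funext => k; congr (V *m _ *m V^T); apply/matrixP => i j.
have mE : forall M N : 'M[R]_n, (M - N) i j = M i j - N i j by move=> M N; rewrite !mxE.
rewrite mE mulJr mulJl !mxE /jv.
case: (eqVneq (blk s i) (blk s j)) => [e|ne].
  rewrite mulr0 mul0r subrr.
  case: (eqVneq (blk s i) k) => [ek|nk]; first by apply: Ykk => //; rewrite -e.
  by apply: Y0 => //; [apply/eqP | rewrite -e; apply/eqP].
case: (eqVneq (blk s i) k) => [ek|nk].
  have nj : blk s j != k by rewrite -ek eq_sym.
  rewrite (negPf nj) ek.
  case: ltnP => hj.
    have -> : blk s j = Ordinal hj by [].
    by rewrite YnE (Yanti k (Ordinal hj)) //; field.
  by rewrite YnE; field.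
case: (eqVneq (blk s j) k) => [ek|nj].
  have hj : (blk s j < size s)%N by rewrite ek.
  rewrite hj.
  have -> : blk s j = Ordinal hj by [].
  have -> : Ordinal hj = k by apply: val_inj.
  by rewrite YnE; field.
rewrite Y0 //; [|exact/eqP|exact/eqP].
by case: ifP => _; field.
Qed.

Lemma MD_eq m p (F : R -> 'M[R]_(m,p)) D1 D2 : MD F D1 -> D1 = D2 -> MD F D2.
Proof. by move=> h <-. Qed.

Lemma MD_uniq m p (F : R -> 'M[R]_(m,p)) D1 D2 : MD F D1 -> MD F D2 -> D1 = D2.
Proof.
move=> h1 h2; apply/matrixP => i j.
by case: (h1 i j) => _ e1; case: (h2 i j) => _ e2; rewrite -e1 -e2.
Qed.

Lemma MD_derive m p (F : R -> 'M[R]_(m,p)) D : MD F D ->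
  (forall i j, derivable (fun t => F t i j) 0 1) /\ 
  ((\matrix_(i, j) derive1 (fun t : R => F t i j) 0) = D).
Proof.
move=> h; split; first by move=> i j; case: (h i j).
by apply/matrixP => i j; rewrite mxE derive1E; case: (h i j).
Qed.

Lemma derive_MD m p (F : R -> 'M[R]_(m,p)) :
  (forall i j, derivable (fun t => F t i j) 0 1) ->
  MD F (\matrix_(i, j) derive1 (fun t : R => F t i j) 0).
Proof. by move=> h i j; rewrite mxE derive1E; exact: derivableP. Qed.

Lemma S1_T (V : 'M[R]_n) (hV : V *m V^T = 1%:M) (A : 'M[R]_n) (skA : A^T = - A) :
  tangent_space (flag R n s) (fun k : 'I_(size s) => V *m Jmx R n s k *m V^T)
    (fun k : 'I_(size s) => V *m (A *m Jmx R n s k - Jmx R n s k *m A) *m V^T).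
Proof.
pose Q := Qc A (index_enum ('I_n * 'I_n)%type).
have MQ : MD Q A by have := MD_Qc A (index_enum ('I_n * 'I_n)%type); rewrite (sumK A skA).
have H : forall k : 'I_(size s), MD (fun t => V *m Q t *m Jmx R n s k *m (Q t)^T *m V^T)
   (V *m (A *m Jmx R n s k - Jmx R n s k *m A) *m V^T).
  move=> k.
  have hh := (MD_mul (MD_mul (MD_mul (MD_mul (MD_cst V) MQ) (MD_cst (Jmx R n s k))) (MD_tr MQ)) (MD_cst V^T)).
  refine (MD_eq hh _).
  rewrite /Q Qc0 trmx1 skA !mulmx0 !mul0mx !addr0 add0r !mulmx1.
  by rewrite mulmxN mulmxBr !mulmxA.
exists (fun t k => V *m Q t *m Jmx R n s k *m (Q t)^T *m V^T).
split; [|split; [|split]].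
- move=> t; exists (V *m Q t); split.
    by rewrite trmx_mul mulmxA -(mulmxA V) Qc_orth mulmx1 hV.
  by apply/funext => k; rewrite trmx_mul !mulmxA.
- by apply/funext => k; rewrite /Q Qc0 trmx1 !mulmx1.
- by move=> k; have [] := MD_derive (H k).
- by apply/funext => k; have [_ ->] := MD_derive (H k).
Qed.

Lemma T_S2 (V : 'M[R]_n) (hV : V *m V^T = 1%:M) X :
  tangent_space (flag R n s) (fun k : 'I_(size s) => V *m Jmx R n s k *m V^T) X ->
  exists Y : 'I_(size s) -> 'M[R]_n,
       (forall k, (Y k)^T = Y k) /\
       (forall (k l : 'I_(size s)) (i j : 'I_n), l != k ->
          blk s i = k -> blk s j = l -> Y k i j = - Y l i j) /\
       (forall (k : 'I_(size s)) (i j : 'I_n),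
          blk s i <> k -> blk s j <> k -> Y k i j = 0) /\
       (forall (k : 'I_(size s)) (i j : 'I_n),
          blk s i = k -> blk s j = k -> Y k i j = 0) /\
       X = (fun k => V *m Y k *m V^T).
Proof.
case=> g [gM [g0 [gd ->]]].
set D := fun k => \matrix_(i, j) derive1 (fun t : R => g t k i j) 0.
have MG : forall k, MD (fun t => g t k) (D k) by move=> k; exact: derive_MD.
have G0 : forall k, g 0 k = V *m Jmx R n s k *m V^T by move=> k; rewrite g0.
have hV' : V^T *m V = 1%:M by exact: mulmx1C.
have sym : forall t k, (g t k)^T = g t k.
  by move=> t k; case: (gM t) => W [hW ->]; rewrite !trmx_mul trmxK JT mulmxA.
have sq : forall t k, g t k *m g t k = 1%:M.
  move=> t k; case: (gM t) => W [hW ->].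
  have hW' : W^T *m W = 1%:M by exact: mulmx1C.
  by rewrite !mulmxA -(mulmxA (W *m _) W^T W) hW' mulmx1 -(mulmxA W) JJ mulmx1.
have cm : forall t k l, g t k *m g t l = g t l *m g t k.
  move=> t k l; case: (gM t) => W [hW ->].
  have hW' : W^T *m W = 1%:M by exact: mulmx1C.
  rewrite !mulmxA -(mulmxA (W *m _) W^T W) hW' mulmx1 -(mulmxA W) Jcomm.
  by rewrite -(mulmxA (W *m _) W^T W) hW' mulmx1 -(mulmxA W (Jmx R n s l)).
have symD : forall k, (D k)^T = D k.
  move=> k; apply: (MD_uniq (MD_tr (MG k))).
  by have -> : (fun t => (g t k)^T) = (fun t => g t k) by apply/funext => t; rewrite sym.
have sqD : forall k, D k *m g 0 k + g 0 k *m D k = 0.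
  move=> k; apply: (MD_uniq (MD_mul (MG k) (MG k))).
  have -> : (fun t => g t k *m g t k) = (fun _ => 1%:M) by apply/funext => t; rewrite sq.
  exact: MD_cst.
have cmD : forall k l, D k *m g 0 l + g 0 k *m D l = D l *m g 0 k + g 0 l *m D k.
  move=> k l; apply: (MD_uniq (MD_mul (MG k) (MG l))).
  have -> : (fun t => g t k *m g t l) = (fun t => g t l *m g t k) by apply/funext => t; rewrite cm.
  exact: (MD_mul (MG l) (MG k)).
pose Y k := V^T *m D k *m V.
have cjr : forall M k, V^T *m (M *m g 0 k) *m V = (V^T *m M *m V) *m Jmx R n s k.
  by move=> M k; rewrite G0 !mulmxA -(mulmxA _ V^T V) hV' mulmx1.
have cjl : forall M k, V^T *m (g 0 k *m M) *m V = Jmx R n s k *m (V^T *m M *m V).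
  by move=> M k; rewrite G0 !mulmxA hV' mul1mx.
have e1 : forall k i j, Y k i j * jv k j + jv k i * Y k i j = 0.
  move=> k i j; have := congr1 (fun M => V^T *m M *m V) (sqD k).
  rewrite /= mulmxDr mulmxDl cjr cjl mulmx0 mul0mx => /matrixP /(_ i j).
  by rewrite [LHS]mxE [RHS]mxE mulJr mulJl.
have e2 : forall (k l : 'I_(size s)) (i j : 'I_n), Y k i j * jv l j + jv k i * Y l i j = Y l i j * jv k j + jv l i * Y k i j.
  move=> k l i j; have := congr1 (fun M => V^T *m M *m V) (cmD k l).
  rewrite /= !mulmxDr !mulmxDl !cjr !cjl => /matrixP /(_ i j).
  by rewrite [LHS]mxE [RHS]mxE !mulJr !mulJl.
exists Y; split; [|split; [|split; [|split]]].
- by move=> k; rewrite /Y !trmx_mul trmxK symD mulmxA.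
- move=> k l i j lk hi hj.
  have lk' : (l : nat) != k by [].
  have := e2 k l i j; rewrite /jv hi hj !eqxx (negPf lk') eq_sym (negPf lk').
  move=> h; lra.
- move=> k i j hi hj; have := e1 k i j.
  rewrite /jv (introF eqP hi) (introF eqP hj) => h; lra.
- move=> k i j hi hj; have := e1 k i j.
  rewrite /jv hi hj eqxx => h; lra.
- apply/funext => k; rewrite /Y !mulmxA hV mul1mx -!mulmxA hV mulmx1.
  by [].
Qed.
End Main.

Theorem proposition3p2 (R : realType) (n : nat) (s : seq nat)
  (hs : sorted ltn (0%N :: s ++ [:: n])) (V : 'M[R]_n)
  (hV : V *m V^T = 1%:M) :
  let f := (fun k : 'I_(size s) => V *m Jmx R n s k *m V^T) in
  tangent_space (flag R n s) f =
    [set X | exists A : 'M[R]_n, A^T = - A /\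
       (forall i j : 'I_n, blk s i = blk s j -> A i j = 0) /\
       X = (fun k : 'I_(size s) =>
              V *m (A *m Jmx R n s k - Jmx R n s k *m A) *m V^T)]
  /\
  tangent_space (flag R n s) f =
    [set X | exists Y : 'I_(size s) -> 'M[R]_n,
       (forall k, (Y k)^T = Y k) /\
       (forall (k l : 'I_(size s)) (i j : 'I_n), l != k ->
          blk s i = k -> blk s j = l -> Y k i j = - Y l i j) /\
       (forall (k : 'I_(size s)) (i j : 'I_n),
          blk s i <> k -> blk s j <> k -> Y k i j = 0) /\
       (forall (k : 'I_(size s)) (i j : 'I_n),
          blk s i = k -> blk s j = k -> Y k i j = 0) /\
       X = (fun k => V *m Y k *m V^T)].

Proof.
move=> f.
set T := tangent_space _ _.
set S1 := [set X | _].
set S2 := [set X | _].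
have TS2 : T `<=` S2 by move=> X /(T_S2 hV).
have S2S1 : S2 `<=` S1.
  move=> X [Y [h1 [h2 [h3 [h4 ->]]]]].
  have [A [hA [hA2 e]]] := S2_S1 R s V Y h1 h2 h3 h4.
  by exists A; rewrite e.
have S1T : S1 `<=` T by move=> X [A [hA [_ ->]]]; exact: (S1_T s hV hA).
split; apply/seteqP; split => //.
- by move=> X /TS2 /S2S1.
- by move=> X /S2S1 /S1T.
Qed.
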